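(* Let $G$ be a $d$-regular graph ($d>1$) and let $\sigma,\sigma'$ be two good signings of $G$ that are not equivalent. Define the signing $\tau$ of $G$ by $\tau(uv)=\sigma(uv)\sigma'(uv)$ for $uv\in E(G)$. Let $G'$ be the $2$-lift of $G$ determined by $\tau$: $V(G')=\bigcup_{v\in V(G)}\{v_0,v_1\}$, and for each $uv\in E(G)$, $G'$ contains the edges $u_0v_0,u_1v_1$ if $\tau(uv)=1$ and the edges $u_0v_1,u_1v_0$ if $\tau(uv)=-1$ (and no other edges). Define the signing $\phi$ of $G'$ by giving both edges of $G'$ lying over $uv\in E(G)$ the sign $\sigma'(uv)$. Then $\phi$ is a good signing of $G'$, i.e. every eigenvalue of the signed adjacency matrix $A^{\phi}$ has absolute value at most $2\sqrt{d-1}$.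
   Context: For an edge-signing $\sigma: E(H)\to\{-1,1\}$ of a graph $H$, the signed adjacency matrix $A^{\sigma}$ has $(i,j)$ entry $\sigma(ij)$ if $ij\in E(H)$ and $0$ otherwise. A good signing of a $d$-regular graph is a signing all of whose signed adjacency eigenvalues have absolute value at most $2\sqrt{d-1}$ (note $G'$ is again $d$-regular). Two signings $\sigma,\sigma'$ of $G$ are equivalent if there is a diagonal matrix $D$ with diagonal entries in $\{1,-1\}$ such that $DA^{\sigma}D=A^{\sigma'}$. *)

(* Defs.v *)
From HB Require Import structures.
From mathcomp Require Import all_boot all_order all_algebra.
Set Implicit Arguments. Unset Strict Implicit. Unset Printing Implicit Defensive.
Import Order.TTheory GRing.Theory Num.Theory.
Local Open Scope ring_scope.

Definition simple_graph (V : finType) (e : rel V) : Prop :=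
  symmetric e /\ irreflexive e.

Definition regular (V : finType) (e : rel V) (d : nat) : Prop :=
  forall v : V, #|[set u | e v u]| = d.

Definition signing (V : finType) (e : rel V) (s : V -> V -> int) : Prop :=
  forall u v, e u v -> s u v = s v u /\ (s u v = 1 \/ s u v = -1).

Definition signed_adj (R : ringType) (V : finType) (e : rel V)
    (s : V -> V -> int) : 'M[R]_#|V| :=
  \matrix_(i, j) (if e (enum_val i) (enum_val j)
                  then (s (enum_val i) (enum_val j))%:~R else 0).

Definition good_signing (R : rcfType) (V : finType) (e : rel V) (d : nat)
    (s : V -> V -> int) : Prop :=
  signing e s /\
  forall a : R, eigenvalue (signed_adj R e s) a ->
    `|a| <= 2 * Num.sqrt (d.-1)%:R.

Definition equiv_signing (R : ringType) (V : finType) (e : rel V)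
    (s s' : V -> V -> int) : Prop :=
  exists delta : V -> int,
    (forall v, delta v = 1 \/ delta v = -1) /\
    let D : 'M[R]_#|V| := diag_mx (\row_i (delta (enum_val i))%:~R) in
    D *m signed_adj R e s *m D = signed_adj R e s'.

Definition lift2 (V : finType) (e : rel V) (tau : V -> V -> int) : rel (V * bool) :=
  fun x y => e x.1 y.1 && ((tau x.1 y.1 == 1) == (x.2 == y.2)).

Definition lift_sign (V : finType) (s' : V -> V -> int) : V * bool -> V * bool -> int :=
  fun x y => s' x.1 y.1.

(* Main.v *)
Require Import Defs.
From HB Require Import structures.
From mathcomp Require Import all_boot all_order all_algebra.
From mathcomp Require Import ring lra.
Import Order.TTheory GRing.Theory Num.Theory.
Local Open Scope ring_scope.

Lemma eigen_fun (R : fieldType) (T : finType) (M : T -> T -> R) a :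
  eigenvalue (\matrix_(i, j) M (enum_val i) (enum_val j) : 'M[R]_#|T|) a <->
  exists2 f : T -> R, (exists t, f t != 0) & forall w, \sum_u f u * M u w = a * f w.
Proof.
split.
- move/eigenvalueP=> [v Hv vn0].
  exists (fun t => v 0 (enum_rank t)).
  + have [j Hj] : exists j, v 0 j != 0.
      apply/existsP; apply: contraR vn0 => /existsPn H.
      apply/eqP/rowP => j; rewrite mxE; by move/negbNE/eqP: (H j).
    by exists (enum_val j); rewrite enum_valK.
  + move=> w; move/rowP/(_ (enum_rank w)): Hv.
    rewrite !mxE; under eq_bigr => j _ do rewrite mxE.
    rewrite (reindex enum_rank) /=; last exact: onW_bij (enum_rank_bij T).
    by under eq_bigr => j _ do rewrite !enum_rankK.
- move=> [f [t Ht] H]; apply/eigenvalueP.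
  exists (\row_i f (enum_val i)).
  + apply/rowP => j; rewrite !mxE; under eq_bigr => i _ do rewrite !mxE.
    rewrite (reindex enum_rank) /=; last exact: onW_bij (enum_rank_bij T).
    under eq_bigr => i _ do rewrite !enum_rankK.
    by rewrite H.
  + apply/negP => /eqP/rowP/(_ (enum_rank t)); rewrite !mxE enum_rankK.
    by move/eqP; rewrite (negbTE Ht).
Qed.

Lemma sumVB (R : nmodType) (V : finType) (F : V * bool -> R) :
  \sum_(p : V * bool) F p = \sum_u (F (u, true) + F (u, false)).
Proof.
transitivity (\sum_u \sum_b F (u, b)); last by apply: eq_bigr => u _; rewrite big_bool.
rewrite (pair_bigA _ (fun u b => F (u, b))).
by apply: eq_bigr => -[u b].

Qed.

Theorem mainTheorem5 (R : rcfType) (V : finType) (e : rel V) (d : nat)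
    (sigma sigma' : V -> V -> int) :
  simple_graph e -> regular e d -> (1 < d)%N ->
  good_signing R e d sigma -> good_signing R e d sigma' ->
  ~ equiv_signing R e sigma sigma' ->
  good_signing R (lift2 e (fun u v => sigma u v * sigma' u v)) d
    (lift_sign sigma').
Proof.
move=> _ _ _ [Ss Gs] [Ss' Gs'] _.
split.
  move=> [u b] [w c]; rewrite /lift2 /lift_sign /= => /andP[euw _].
  exact: Ss'.
move=> a Ha.
pose Ms := fun (s : V -> V -> int) u w => if e u w then (s u w)%:~R else (0 : R).
pose M := fun p q => if lift2 e (fun u v => sigma u v * sigma' u v) p q
                     then ((lift_sign sigma' p q)%:~R : R) else 0.
have [F [[t0 b0] Ht0] HF] := proj1 (@eigen_fun R _ M a) Ha.
have key1 : forall u w, M (u, true) (w, true) + M (u, true) (w, false) = Ms sigma' u w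
                     /\ M (u, false) (w, true) + M (u, false) (w, false) = Ms sigma' u w.
  move=> u w; rewrite /M /Ms /lift2 /lift_sign /=.
  case: (e u w) => /=; last by rewrite addr0.
  by case: (sigma u w * sigma' u w == 1) => /=; rewrite ?addr0 ?add0r.
have key2 : forall u w, M (u, true) (w, true) - M (u, true) (w, false) = Ms sigma u w
                     /\ M (u, false) (w, true) - M (u, false) (w, false) = - Ms sigma u w.
  move=> u w; rewrite /M /Ms /lift2 /lift_sign /=.
  case E: (e u w) => /=; last by rewrite subr0 oppr0.
  have [_ [] S1] := Ss _ _ E; have [_ [] S2] := Ss' _ _ E;
    by rewrite S1 S2 /= ?subr0 ?sub0r ?mulrNz ?opprK.
pose x := fun u => F (u, true) + F (u, false).
pose y := fun u => F (u, true) - F (u, false).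
have Hx : forall w, \sum_u x u * Ms sigma' u w = a * x w.
  move=> w; have H1 := HF (w, true); have H2 := HF (w, false).
  rewrite !sumVB in H1 H2.
  rewrite /x mulrDr -H1 -H2 -big_split; apply: eq_bigr => u _ /=.
  have [k1 k2] := key1 u w; rewrite /x mulrDl -{1}k1 -k2; ring.
have Hy : forall w, \sum_u y u * Ms sigma u w = a * y w.
  move=> w; have H1 := HF (w, true); have H2 := HF (w, false).
  rewrite !sumVB in H1 H2.
  rewrite /y mulrBr -H1 -H2 -sumrB; apply: eq_bigr => u _ /=.
  have [k1 k2] := key2 u w.
  rewrite /y mulrBl -{1}k1 -[Ms sigma u w]opprK -k2; ring.
case: (pickP (fun t => x t != 0)) => [t Hxt|Hx0].
  apply: Gs'; exact: (proj2 (@eigen_fun R _ (Ms sigma') a) (ex_intro2 _ _ x (ex_intro _ t Hxt) Hx)).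
apply: Gs; apply: (proj2 (@eigen_fun R _ (Ms sigma) a)).
exists y => //; exists t0.
apply/negP => /eqP Hy0.
have /negbFE/eqP Hx1 := Hx0 t0.
move: Ht0; rewrite /x /y in Hx1 Hy0.
case: b0 => /eqP; apply; lra.
Qed.
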